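(* Let $q\ge2$, $\mu,R>0$ and $\omega=\min\{1,\mu/4\}$. There is no sequence of $l_i$-shot ID codes for $\Pi^q_{n_i}$, $i=1,2,\dots$, with $n_i\to\infty$, $l_i/n_i^{\omega}\to0$, $M_i\ge 2^{R n_i^{l_i(q-1)}}$ messages, and type-I and type-II error probabilities satisfying $\lambda_{1,i}<n_i^{-\mu}$ and $\lambda_{2,i}<n_i^{-\mu}$ for all $i$.
   Context: Fix an integer $q\ge 2$ and let $\mathcal A_q=\{1,\dots,q\}$. For $n\ge1$ and $\sigma\in S_n$ (the symmetric group on $\{1,\dots,n\}$), $\sigma\mathbf x=(x_{\sigma^{-1}(1)},\dots,x_{\sigma^{-1}(n)})$ for $\mathbf x\in\mathcal A_q^n$. The $n$-block $q$-ary uniform permutation channel $\Pi^q_n$ has input/output alphabet $\mathcal A_q^n$ and $\Pi^q_n(\mathbf y\mid\mathbf x)=\frac1{n!}\sum_{\sigma\in S_n}\mathbf 1\{\mathbf y=\sigma\mathbf x\}$. Using it $l$ times (independently on each block) gives the channel $W^{(l)}$ on $(\mathcal A_q^n)^l$ with $W^{(l)}(\mathbf y^{(1)},\dots,\mathbf y^{(l)}\mid \mathbf x^{(1)},\dots,\mathbf x^{(l)})=\prod_{s=1}^l\Pi^q_n(\mathbf y^{(s)}\mid\mathbf x^{(s)})$. An $l$-shot ID code with $M$ messages for $\Pi^q_n$ (an ''$(n,l,M,\lambda_1,\lambda_2)$ ID code'') is a family $\{(Q_i,\mathcal D_i)\}_{i=1}^M$ with $Q_i$ a probability distribution on $(\mathcal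 A_q^n)^l$ and $\mathcal D_i\subseteq(\mathcal A_q^n)^l$; its error probabilities are $\lambda_{i\to j}=\sum_{\underline{\mathbf x}}Q_i(\underline{\mathbf x})\sum_{\underline{\mathbf y}\in\mathcal D_j}W^{(l)}(\underline{\mathbf y}\mid\underline{\mathbf x})$ ($i\neq j$), $\lambda_{i\not\to i}=\sum_{\underline{\mathbf x}}Q_i(\underline{\mathbf x})\sum_{\underline{\mathbf y}\notin\mathcal D_i}W^{(l)}(\underline{\mathbf y}\mid\underline{\mathbf x})$, type-I error probability $\lambda_1=\max_i\lambda_{i\not\to i}$, type-II error probability $\lambda_2=\max_{i\ne j}\lambda_{i\to j}$. *)

(* Defs.v *)
From HB Require Import structures.
From mathcomp Require Import all_boot all_order all_algebra all_fingroup.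
From mathcomp Require Import all_classical all_reals all_analysis.
Set Implicit Arguments. Unset Strict Implicit. Unset Printing Implicit Defensive.
Import Order.TTheory GRing.Theory Num.Theory.
Local Open Scope ring_scope.

(* The alphabet A_q = {1,...,q} is represented by 'I_q = {0,...,q-1}. *)
Definition word (q n : nat) := {ffun 'I_n -> 'I_q}.

Definition permw (q n : nat) (s : 'S_n) (x : word q n) : word q n :=
  [ffun k => x ((s^-1)%g k)].

Definition Pi (R : realType) (q n : nat) (y x : word q n) : R :=
  (n`!%:R)^-1 * \sum_(s : 'S_n) (y == permw s x)%:R.

Definition lword (q n l : nat) := {ffun 'I_l -> word q n}.

Definition Wl (R : realType) (q n l : nat) (y x : lword q n l) : R :=
  \prod_(s < l) Pi R (y s) (x s).

Record IDcode (R : realType) (q n l M : nat) := {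
  Qd : 'I_M -> {ffun lword q n l -> R};
  Dd : 'I_M -> {set lword q n l};
  Qd_ge0 : forall i x, 0 <= Qd i x;
  Qd_sum1 : forall i, \sum_x Qd i x = 1 }.

Definition lam_to (R : realType) q n l M (C : IDcode R q n l M) (i j : 'I_M) : R :=
  \sum_x Qd C i x * \sum_(y in Dd C j) Wl R y x.

Definition lam_not (R : realType) q n l M (C : IDcode R q n l M) (i : 'I_M) : R :=
  \sum_x Qd C i x * \sum_(y in ~: Dd C i) Wl R y x.

Definition lambda1 (R : realType) q n l M (C : IDcode R q n l M) : R :=
  \big[Num.max/0]_(i < M) lam_not C i.

Definition lambda2 (R : realType) q n l M (C : IDcode R q n l M) : R :=
  \big[Num.max/0]_(i < M) \big[Num.max/0]_(j < M | j != i) lam_to C i j.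

(* Main.v *)
Require Import Defs.
From HB Require Import structures.
From mathcomp Require Import all_boot all_order all_algebra all_fingroup.
From mathcomp Require Import all_classical all_reals all_analysis.
From mathcomp Require Import zify ring lra.
Import Order.TTheory GRing.Theory Num.Theory.
Set Implicit Arguments. Unset Strict Implicit. Unset Printing Implicit Defensive.
Local Open Scope ring_scope.

Lemma permwM (q n : nat) (s t : 'S_n) (x : word q n) :
  permw s (permw t x) = permw (t * s) x.
Proof. by apply/ffunP => k; rewrite !ffunE invMg permM. Qed.

Lemma permw1 (q n : nat) (x : word q n) : permw 1 x = x.
Proof. by apply/ffunP => k; rewrite !ffunE invg1 perm1. Qed.

Lemma Pi_perm (R : realType) (q n : nat) (s : 'S_n) (y x : word q n) :
  Pi R (permw s y) x = Pi R y x.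
Proof.
rewrite /Pi; congr (_ * _).
rewrite (reindex_inj (mulIg s)) /=.
apply: eq_bigr => t _.
have -> : (permw s y == permw (t * s) x) = (y == permw t x) => //.
apply/eqP/eqP => [H|->]; last by rewrite permwM.
have := congr1 (permw s^-1) H.
by rewrite !permwM mulgV -mulgA mulgV mulg1 !permw1.
Qed.

Definition tup (q n : nat) (w : word q n) : n.-tuple 'I_q := [tuple w k | k < n].

Lemma perm_of_counts (q n : nat) (w w' : word q n) :
  (forall a, count_mem a (tup w') = count_mem a (tup w)) ->
  exists s : 'S_n, w' = permw s w.
Proof.
move=> H.
have : perm_eq (tup w') (tup w) by apply/allP => a _; apply/eqP; exact: H.
move=> /tuple_permP [p Hp].
exists p^-1%g; apply/ffunP => k; rewrite ffunE invgK.
have := congr1 (fun t => nth (w' k) t k) Hp.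
by rewrite -!tnth_nth !tnth_mktuple.
Qed.

Lemma sum_count_mem (q : nat) (s : seq 'I_q) :
  (\sum_(a : 'I_q) count_mem a s)%N = size s.
Proof.
elim: s => [|x s IH] /=; first by rewrite big1.
rewrite big_split /= IH -add1n; congr (_ + _)%N.
rewrite (bigD1 x) //= eqxx big1 // => a /negbTE; by rewrite eq_sym => ->.
Qed.

Definition tau (p n l : nat) (y : lword p.+1 n l) : {ffun 'I_l -> {ffun 'I_p -> 'I_n.+1}} :=
  [ffun s => [ffun a => inord (count_mem (widen_ord (leqnSn p) a) (tup (y s)))]].

Lemma count_tup_le (q n : nat) (w : word q n) a : (count_mem a (tup w) < n.+1)%N.
Proof. by rewrite ltnS; apply: leq_trans (count_size _ _) _; rewrite size_tuple. Qed.

Lemma tau_counts (p n l : nat) (y y' : lword p.+1 n l) : tau y = tau y' ->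
  forall s a, count_mem a (tup (y' s)) = count_mem a (tup (y s)).
Proof.
move=> H s.
have E a : count_mem (widen_ord (leqnSn p) a) (tup (y' s)) =
           count_mem (widen_ord (leqnSn p) a) (tup (y s)).
  have := congr1 (fun f : {ffun _ -> {ffun _ -> _}} => nat_of_ord (f s a)) H.
  by rewrite !ffunE /= !inordK ?count_tup_le.
have S : forall w : word p.+1 n, (\sum_(a < p.+1) count_mem a (tup w))%N = n.
  by move=> w; rewrite sum_count_mem size_tuple.
have L : count_mem ord_max (tup (y' s)) = count_mem ord_max (tup (y s)).
  have := S (y' s); have := S (y s).
  rewrite !big_ord_recr (eq_bigr _ (fun a _ => E a)) => e1 e2.
  apply: (@addnI (\sum_(i < p) count_mem (widen_ord (leqnSn p) i) (tup (y s)))).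
  by rewrite e2 e1.
move=> a; case: (unliftP ord_max a) => [b ->|->] //.
have -> : lift ord_max b = widen_ord (leqnSn p) b by apply/val_inj; rewrite /= /bump leqNgt ltn_ord.
exact: E.
Qed.

Lemma Wl_tau (R : realType) (p n l : nat) (y y' x : lword p.+1 n l) :
  tau y = tau y' -> Wl R y x = Wl R y' x.
Proof.
move=> H; rewrite /Wl; apply: eq_bigr => s _.
have [σ ->] := perm_of_counts (tau_counts H s).
by rewrite Pi_perm.
Qed.

Lemma lam_not_le1 (R : realType) q n l M (C : IDcode R q n l M) i :
  lam_not C i <= lambda1 C.
Proof. exact: (le_bigmax _ (fun i => lam_not C i) i). Qed.

Lemma lam_to_le2 (R : realType) q n l M (C : IDcode R q n l M) i j :
  j != i -> lam_to C i j <= lambda2 C.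
Proof.
move=> ji; apply: le_trans (le_bigmax _ _ i).
exact: (le_bigmax_cond _ (fun j => lam_to C i j) ji).
Qed.

Lemma Pi_ge0 (R : realType) q n (y x : word q n) : 0 <= Pi R y x.
Proof. by rewrite /Pi mulr_ge0 ?invr_ge0 ?ler0n // sumr_ge0 // => s _; rewrite ler0n. Qed.

Lemma Pi_sum1 (R : realType) q n (x : word q n) : \sum_y Pi R y x = 1.
Proof.
rewrite /Pi -mulr_sumr exchange_big /=.
rewrite (eq_bigr (fun _ => 1)) => [|s _]; last by rewrite (bigD1 (permw s x)) //= eqxx big1 ?addr0 // => y /negbTE ->.
by rewrite sumr_const card_Sn mulVf // pnatr_eq0 -lt0n fact_gt0.
Qed.

Lemma Wl_ge0 (R : realType) q n l (y x : lword q n l) : 0 <= Wl R y x.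
Proof. by apply: prodr_ge0 => s _; exact: Pi_ge0. Qed.

Lemma Wl_sum1 (R : realType) q n l (x : lword q n l) : \sum_y Wl R y x = 1.
Proof.
rewrite /Wl.
have := bigA_distr_bigA (fun (s : 'I_l) (w : word q n) => Pi R w (x s)).
move=> <-; rewrite (eq_bigr (fun _ => 1)) => [|s _]; last exact: Pi_sum1.
by rewrite big1_eq.
Qed.

Definition Pout (R : realType) q n l M (C : IDcode R q n l M) i (y : lword q n l) : R :=
  \sum_x Qd C i x * Wl R y x.

Lemma Pout_ge0 (R : realType) q n l M (C : IDcode R q n l M) i y : 0 <= Pout C i y.
Proof. by apply: sumr_ge0 => x _; rewrite mulr_ge0 ?Qd_ge0 ?Wl_ge0. Qed.

Lemma Pout_sum1 (R : realType) q n l M (C : IDcode R q n l M) i : \sum_y Pout C i y = 1.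
Proof.
rewrite /Pout exchange_big /= -(Qd_sum1 C i); apply: eq_bigr => x _.
by rewrite -mulr_sumr Wl_sum1 mulr1.
Qed.

Lemma lam_toE (R : realType) q n l M (C : IDcode R q n l M) i j :
  lam_to C i j = \sum_(y in Dd C j) Pout C i y.
Proof.
rewrite /lam_to /Pout (eq_bigr (fun x => \sum_(y in Dd C j) Qd C i x * Wl R y x)).
  by rewrite exchange_big.
by move=> x _; rewrite mulr_sumr.
Qed.

Lemma lam_notE (R : realType) q n l M (C : IDcode R q n l M) i :
  lam_not C i = \sum_(y in ~: Dd C i) Pout C i y.
Proof.
rewrite /lam_not /Pout (eq_bigr (fun x => \sum_(y in ~: Dd C i) Qd C i x * Wl R y x)).
  by rewrite exchange_big.
by move=> x _; rewrite mulr_sumr.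
Qed.

Lemma Pout_tau (R : realType) p n l M (C : IDcode R p.+1 n l M) i (y y' : lword p.+1 n l) :
  tau y = tau y' -> Pout C i y = Pout C i y'.
Proof. by move=> H; apply: eq_bigr => x _; rewrite (Wl_tau _ x H). Qed.

Definition Oty (p n l : nat) := {ffun 'I_l -> {ffun 'I_p -> 'I_n.+1}}.

Definition fib (p n l : nat) (o : Oty p n l) : {set lword p.+1 n l} :=
  [set y | tau y == o].

Definition piO (R : realType) p n l M (C : IDcode R p.+1 n l M) i (o : Oty p n l) : R :=
  \sum_(y in fib o) Pout C i y.

Definition Bset (p n l : nat) (E : {set lword p.+1 n l}) : {set Oty p n l} :=
  [set o | (#|fib o| <= 2 * #|fib o :&: E|)%N].

Lemma sum_fib (R : realType) p n l (E : {set lword p.+1 n l}) (F : lword p.+1 n l -> R) :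
  \sum_(y in E) F y = \sum_(o : Oty p n l) \sum_(y in fib o :&: E) F y.
Proof.
rewrite (partition_big (@tau p n l) predT) //=.
apply: eq_bigr => o _; apply: eq_bigl => y.
by rewrite !inE andbC.
Qed.

Lemma piO_ge0 (R : realType) p n l M (C : IDcode R p.+1 n l M) i o : 0 <= piO C i o.
Proof. by apply: sumr_ge0 => y _; exact: Pout_ge0. Qed.

Lemma piO_sum1 (R : realType) p n l M (C : IDcode R p.+1 n l M) i :
  \sum_o piO C i o = 1.
Proof.
rewrite -(Pout_sum1 C i).
have := sum_fib [set: lword p.+1 n l] (Pout C i).
rewrite (eq_bigl xpredT) => [->|y]; last by rewrite inE.
by apply: eq_bigr => o _; rewrite finset.setIT.
Qed.

Lemma piO_pt (R : realType) p n l M (C : IDcode R p.+1 n l M) i o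
  (E : {set lword p.+1 n l}) :
  (#|fib o| <= 2 * #|fib o :&: E|)%N ->
  piO C i o <= 2 * \sum_(y in fib o :&: E) Pout C i y.
Proof.
move=> H.
case: (set_0Vmem (fib o)) => [e|[y0 Hy0]].
  by rewrite /piO e big_set0 mulr_ge0 // sumr_ge0 // => y _; exact: Pout_ge0.
have cst y : y \in fib o -> Pout C i y = Pout C i y0.
  move: Hy0; rewrite !inE => /eqP h1 /eqP h2; apply: Pout_tau; by rewrite h1 h2.
rewrite /piO (eq_bigr (fun _ => Pout C i y0) cst).
rewrite [X in _ <= 2 * X](eq_bigr (fun _ => Pout C i y0)); last by move=> y /setIP[/cst].
rewrite !sumr_const mulrnAr mulr_natl -mulrnA.
by apply: ler_wpMn2l; [exact: Pout_ge0 | exact: H].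
Qed.

Lemma piO_B (R : realType) p n l M (C : IDcode R p.+1 n l M) i
  (E : {set lword p.+1 n l}) :
  \sum_(o in Bset E) piO C i o <= 2 * \sum_(y in E) Pout C i y.
Proof.
rewrite (sum_fib E) mulr_sumr.
apply: (@le_trans _ _ (\sum_(o in Bset E) 2 * \sum_(y in fib o :&: E) Pout C i y)).
  by apply: ler_sum => o; rewrite /Bset inE; exact: piO_pt.
rewrite [leRHS](bigID (mem (Bset E))) /= lerDl.
by apply: sumr_ge0 => o _; rewrite mulr_ge0 // sumr_ge0 // => y _; exact: Pout_ge0.
Qed.

Lemma notB (p n l : nat) (E : {set lword p.+1 n l}) o :
  o \notin Bset E -> o \in Bset (~: E).
Proof.
rewrite !inE -ltnNge => H.
have := cardsID E (fib o); rewrite finset.setDE => e.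
rewrite -e in H *; move: H; move: (#|fib o :&: E|) (#|fib o :&: ~: E|) => a b.
lia.
Qed.

Lemma code_B_own (R : realType) p n l M (C : IDcode R p.+1 n l M) i :
  1 - 2 * lambda1 C <= \sum_(o in Bset (Dd C i)) piO C i o.
Proof.
have e := piO_sum1 C i; rewrite (bigID (mem (Bset (Dd C i)))) /= in e.
rewrite -{1}e -addrA gerDl subr_le0.
apply: (@le_trans _ _ (\sum_(o in Bset (~: Dd C i)) piO C i o)).
  rewrite [leRHS](bigID (fun o => o \notin Bset (Dd C i))) /=.
  rewrite -[leLHS]addr0 lerD //; last by apply: sumr_ge0 => o _; exact: piO_ge0.
  rewrite le_eqVlt; apply/orP; left; apply/eqP; apply: eq_bigl => o.
  by case: (boolP (o \in Bset (Dd C i))) => h /=; [rewrite andbF | rewrite (notB h)].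
apply: le_trans (piO_B C i _) _.
by rewrite -lam_notE ler_wpM2l // lam_not_le1.
Qed.

Lemma code_B_other (R : realType) p n l M (C : IDcode R p.+1 n l M) i j :
  j != i -> \sum_(o in Bset (Dd C j)) piO C i o <= 2 * lambda2 C.
Proof.
move=> ji; apply: le_trans (piO_B C i _) _.
by rewrite -lam_toE ler_wpM2l // lam_to_le2.
Qed.

Definition G (R : realType) (O : finType) m (f : O -> R) (B : {set O}) (T : {ffun 'I_m -> O}) : R :=
  \prod_k (if T k \in B then f (T k) else 0).

Lemma G_all (R : realType) (O : finType) m (f : O -> R) (B : {set O}) (T : {ffun 'I_m -> O}) :
  [forall k, T k \in B] -> G f B T = \prod_k f (T k).
Proof. by move=> /forallP H; apply: eq_bigr => k _; rewrite H. Qed.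

Lemma G_not (R : realType) (O : finType) m (f : O -> R) (B : {set O}) (T : {ffun 'I_m -> O}) :
  ~~ [forall k, T k \in B] -> G f B T = 0.
Proof.
move=> /forallPn [k /negbTE H].
by rewrite /G (bigD1 k) //= H mul0r.
Qed.

Lemma sumG (R : realType) (O : finType) m (f : O -> R) (B : {set O}) :
  \sum_(T : {ffun 'I_m -> O}) G f B T = (\sum_(o in B) f o) ^+ m.
Proof.
rewrite /G -(bigA_distr_bigA (fun (k : 'I_m) (o : O) => if o \in B then f o else 0)).
by rewrite prodr_const card_ord -big_mkcond.
Qed.

Definition good (O : finType) M m (B : 'I_M -> {set O}) i (T : {ffun 'I_m -> O}) :=
  [forall k, T k \in B i] && [forall j, (j != i) ==> [exists k, T k \notin B j]].

Lemma good_ex (R : realType) (O : finType) M m (f : 'I_M -> O -> R) (B : 'I_M -> {set O}) (d : R) i :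
  (forall i o, 0 <= f i o) -> 0 <= d -> 0 <= 1 - d ->
  (forall i, 1 - d <= \sum_(o in B i) f i o) ->
  (forall i j, j != i -> \sum_(o in B j) f i o <= d) ->
  M%:R * d ^+ m < (1 - d) ^+ m ->
  exists T : {ffun 'I_m -> O}, good B i T.
Proof.
move=> f0 d0 d1 Hown Hoth Hm.
case: (boolP [exists T : {ffun 'I_m -> O}, good B i T]) => [/existsP//|/existsPn Hno]; exfalso.
have pw (T : {ffun 'I_m -> O}) : G (f i) (B i) T <= \sum_(j | j != i) G (f i) (B j) T.
  case: (boolP [forall k, T k \in B i]) => Hall; last first.
    by rewrite G_not // sumr_ge0 // => j _; rewrite /G prodr_ge0 // => k _; case: ifP.
  have := Hno T; rewrite /good Hall /= => /forallPn [j].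
  rewrite negb_imply => /andP [ji /existsPn Hj].
  rewrite (bigD1 j) //= (@G_all _ _ _ _ (B j) T); last by apply/forallP => k; have := Hj k; rewrite negbK.
  rewrite [G (f i) (B i) T]G_all // lerDl sumr_ge0 // => j' _.
  by rewrite /G prodr_ge0 // => k _; case: ifP.
have := @ler_sum _ _ (index_enum {ffun 'I_m -> O}) xpredT _ _ (fun T _ => pw T).
rewrite sumG exchange_big /=.
rewrite (eq_bigr (fun j => (\sum_(o in B j) f i o) ^+ m)); last by move=> j _; rewrite sumG.
move=> H.
have : (1 - d) ^+ m <= M%:R * d ^+ m.
  apply: le_trans (lerXn2r _ _ _ (Hown i)) _; rewrite ?nnegrE //.
    by apply: sumr_ge0 => o _.
  apply: le_trans H _.
  apply: (@le_trans _ _ (\sum_(j < M | j != i) d ^+ m)).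
    apply: ler_sum => j ji; apply: lerXn2r; rewrite ?nnegrE //; last exact: Hoth.
    by apply: sumr_ge0 => o _.
  rewrite sumr_const mulr_natl; apply: ler_wpMn2l; first exact: exprn_ge0.
  by apply: leq_trans (max_card _) _; rewrite card_ord.
by move=> H0; have := lt_le_trans Hm H0; rewrite ltxx.
Qed.

Lemma card_small_sets (O : finType) m :
  #|[set S : {set O} | (#|S| <= m)%N]| = (\sum_(k < m.+1) 'C(#|O|, k))%N.
Proof.
rewrite -sum1_card (partition_big (fun S : {set O} => (inord #|S| : 'I_m.+1)) predT) //=.
apply: eq_bigr => k _.
rewrite -card_draws sum1_card; apply: eq_card => S; rewrite unfold_in /= !inE.
case: (leqP #|S| m) => h /=.
  by apply/eqP/eqP => [<-|->]; [rewrite inordK | apply/val_inj; rewrite /= inordK].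
apply/esym/negbTE; apply/eqP => e; move: h; rewrite e; have := ltn_ord k; lia.
Qed.

Lemma sample_bound (R : realType) (O : finType) M m (f : 'I_M -> O -> R) (B : 'I_M -> {set O}) (d : R) :
  (0 < m)%N ->
  (forall i o, 0 <= f i o) -> 0 <= d -> 0 <= 1 - d ->
  (forall i, 1 - d <= \sum_(o in B i) f i o) ->
  (forall i j, j != i -> \sum_(o in B j) f i o <= d) ->
  M%:R * d ^+ m < (1 - d) ^+ m ->
  (M < \sum_(k < m.+1) 'C(#|O|, k))%N.
Proof.
move=> m0 f0 d0 d1 Hown Hoth Hm.
pose S (i : 'I_M) : {set O} :=
  if [pick T : {ffun 'I_m -> O} | good B i T] is Some T then [set T k | k : 'I_m] else finset.set0.
have HS i : [/\ S i != finset.set0, (#|S i| <= m)%N, S i \subset B i &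
               forall j, j != i -> ~~ (S i \subset B j)].
  rewrite /S; case: pickP => [T /andP [/forallP H1 /forallP H2]|Hn]; last first.
    have [T HT] := good_ex i f0 d0 d1 Hown Hoth Hm.
    by have := Hn T; rewrite HT.
  split.
  - apply/set0Pn; exists (T (Ordinal m0)); exact: imset_f.
  - by apply: leq_trans (leq_imset_card _ _) _; rewrite card_ord.
  - by apply/fintype.subsetP => o /imsetP [k _ ->]; exact: H1.
  - move=> j ji; have := H2 j; rewrite ji /= => /existsP [k Hk].
    by apply/fintype.subsetPn; exists (T k); [exact: imset_f | exact: Hk].
have Sinj : injective S.
  move=> i j e; apply/eqP; apply/negPn/negP => ij.
  have [_ _ _ H] := HS j; have [_ _ Hi _] := HS i.
  by move: (H i ij); rewrite -e Hi.
rewrite -card_small_sets.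
have -> : M = #|S @: [set: 'I_M]| by rewrite card_imset // cardsT card_ord.
apply: proper_card; apply/properP; split.
  apply/fintype.subsetP => X /imsetP [i _ ->]; rewrite inE; by have [] := HS i.
exists finset.set0; first by rewrite inE cards0.
by apply/imsetP => [[i _ e]]; have [] := HS i; rewrite -e eqxx.
Qed.

Lemma binom_bound (R : realType) (K m : nat) : (0 < m)%N -> (m <= K)%N ->
  ((\sum_(k < m.+1) 'C(K, k))%N)%:R <= expR (m%:R : R) * (K%:R / m%:R) ^+ m.
Proof.
move=> m0 mK.
have K0 : (0 < K)%N by apply: leq_trans mK.
set x : R := m%:R / K%:R.
have x0 : 0 < x by rewrite divr_gt0 ?ltr0n.
have x1 : x <= 1 by rewrite ler_pdivrMr ?ltr0n // mul1r ler_nat.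
have Kx : K%:R * x = m%:R by rewrite /x mulrCA divff ?mulr1 // pnatr_eq0 -lt0n.
have H1 : x ^+ m * ((\sum_(k < m.+1) 'C(K, k))%N)%:R <= expR (m%:R : R).
  rewrite natr_sum mulr_sumr.
  apply: (@le_trans _ _ (\sum_(k < m.+1) x ^+ k *+ 'C(K, k))).
    apply: ler_sum => k _; rewrite mulr_natr; apply: ler_wMn2r.
    by apply: ler_wiXn2l; [exact: ltW | exact: x1 | rewrite -ltnS; exact: ltn_ord].
  apply: (@le_trans _ _ (\sum_(k < K.+1) x ^+ k *+ 'C(K, k))).
    rewrite (big_ord_widen K.+1 (fun k => x ^+ k *+ 'C(K, k))) ?ltnS //.
    rewrite [leRHS](bigID (fun k : 'I_K.+1 => (k < m.+1)%N)) /= lerDl.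
    by apply: sumr_ge0 => k _; rewrite mulrn_wge0 // exprn_ge0 // ltW.
  rewrite -exprD1n -Kx expRM_natl.
  have hx : 0 <= x + 1 by rewrite addr_ge0 // ltW.
  apply: lerXn2r; [by rewrite nnegrE | rewrite nnegrE; exact: ltW (expR_gt0 _) | by rewrite addrC expR_ge1Dx].
have xm0 : 0 < x ^+ m by rewrite exprn_gt0.
rewrite -(ler_pM2l xm0) [leRHS]mulrCA -exprMn.
have -> : x * (K%:R / m%:R) = 1.
  rewrite -(invf_div (m%:R : R) (K%:R)) mulfV //; exact: lt0r_neq0.
by rewrite expr1n mulr1.
Qed.

Lemma ln_tangent (R : realType) (y k : R) : 0 < y -> 0 < k -> ln y <= y / k + ln k - 1.
Proof.
move=> y0 k0.
have h : ln (y / k) <= y / k - 1.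
  have := @le_ln1Dx R (y / k - 1).
  rewrite addrCA subrr addr0; apply.
  have : 0 < y / k by rewrite divr_gt0.
  lra.
rewrite ln_div ?posrE // in h.
lra.
Qed.

Lemma core_ineq (R : realType) (A L Kr c1 : R) (m : nat) :
  0 < L -> L <= A -> 1 <= L -> 0 <= c1 -> 4 * (ln 4 + c1) <= L ->
  0 < Kr -> ln Kr <= ln A + c1 ->
  A / L < m%:R -> m%:R <= A / L + 1 ->
  m%:R + m%:R * (ln Kr - ln m%:R) <= A.
Proof.
move=> L0 LA L1 c10 Lc K0 HK m1 m2.
have A0 : 0 < A by apply: lt_le_trans LA.
have AL0 : 0 < A / L by rewrite divr_gt0.
have m0 : 0 < (m%:R : R) by apply: lt_trans m1.
have lm : ln (A / L) <= ln m%:R by rewrite ler_ln ?posrE // ltW.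
rewrite ln_div ?posrE // in lm.
have lnL0 : 0 <= ln L by apply: ln_ge0.
have t := @ln_tangent R L 4 L0 (ltr0Sn _ _).
have e1 : m%:R + m%:R * (ln Kr - ln m%:R) <= m%:R * (1 + c1 + ln L).
  have : ln Kr - ln m%:R <= c1 + ln L by lra.
  move=> h; rewrite -[X in X + _]mulr1 -mulrDr; apply: ler_wpM2l; [exact: ltW | lra].
apply: le_trans e1 _.
have pos : 0 <= 1 + c1 + ln L by lra.
have e2 : m%:R * (1 + c1 + ln L) <= (2 * A / L) * (1 + c1 + ln L).
  apply: ler_wpM2r => //.
  have : 1 <= A / L by rewrite ler_pdivlMr // mul1r.
  rewrite -mulrA; lra.
apply: le_trans e2 _.
have e3 : 2 * (1 + c1 + ln L) <= L by lra.
have -> : 2 * A / L * (1 + c1 + ln L) = (A / L) * (2 * (1 + c1 + ln L)) by ring.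
apply: le_trans (_ : A / L * L <= A).
  by apply: ler_wpM2l => //; exact: ltW.
by rewrite divfK // gt_eqF.
Qed.

Lemma powR2E (R : realType) (y : R) : 2 `^ y = expR (y * ln 2).
Proof. by rewrite /powR ifF //; apply/negbTE; rewrite pnatr_eq0. Qed.

Lemma powRnE (R : realType) (x y : R) : 0 < x -> x `^ y = expR (y * ln x).
Proof. by move=> x0; rewrite /powR ifF //; apply/negbTE; rewrite gt_eqF. Qed.

Lemma exp_pow (R : realType) (x : R) (m : nat) : 0 < x -> x ^+ m = expR (m%:R * ln x).
Proof. by move=> x0; rewrite expRM_natl lnK. Qed.

Lemma part_i (R : realType) (A L mu a : R) (m : nat) :
  0 < L -> A < m%:R * L -> L = mu * a - ln 4 ->
  expR A * (2 * expR (- mu * a)) ^+ m < (1 - 2 * expR (- mu * a)) ^+ m.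
Proof.
move=> L0 AmL eL.
set u := expR (- L).
have n4 : (4 : R) != 0 by rewrite pnatr_eq0.
have eu : expR ((- mu) * a) = u / 4.
  rewrite /u eL opprB expRD lnK ?posrE // mulNr mulrAC divff // mul1r //.
rewrite eu.
have u0 : 0 < u by apply: expR_gt0.
have u1 : u <= 1 by rewrite /u -expR0 ler_expR; lra.
have -> : 2 * (u / 4) = u * (1 / 2).
  by field.
rewrite exprMn mulrA.
have -> : expR A * u ^+ m = expR (A - m%:R * L).
  by rewrite /u -expRM_natl -expRD mulrN.
have h1 : expR (A - m%:R * L) < 1 by rewrite -[X in _ < X]expR0 ltr_expR; lra.
have h2 : (1 / 2 : R) ^+ m <= (1 - u * (1 / 2)) ^+ m.
  by apply: lerXn2r; rewrite ?nnegrE; lra.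
have h3 : (0 : R) < (1 / 2) ^+ m by rewrite exprn_gt0 //; lra.
apply: lt_le_trans h2.
by rewrite -[X in _ < X]mul1r ltr_pM2r.
Qed.

Lemma numeric (R : realType) (mu Rate : R) (p : nat) : 0 < mu -> 0 < Rate -> (0 < p)%N ->
  exists T : R, forall n l : nat, T <= n%:R -> (0 < l)%N -> (l <= n)%N ->
   exists m : nat, [/\ (0 < m)%N, (m <= (n.+1 ^ p) ^ l)%N,
      2 `^ (Rate * n%:R ^+ (l * p)) * (2 * n%:R `^ (- mu)) ^+ m
        < (1 - 2 * n%:R `^ (- mu)) ^+ m &
      expR (m%:R : R) * (((n.+1 ^ p) ^ l)%N%:R / m%:R) ^+ m
        <= 2 `^ (Rate * n%:R ^+ (l * p))].
Proof.
move=> mu0 R0 p0.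
pose r := Rate * ln 2.
have ln20 : 0 < ln (2 : R) by apply: ln_gt0; rewrite ltr1n.
have r0 : 0 < r by rewrite mulr_gt0.
pose c1 := p%:R + `|ln r|.
pose Lmin := Num.max (Num.max 1 (2 * r)) (4 * (ln 4 + c1)).
pose k := 2 * mu / r.
have k0 : 0 < k by rewrite divr_gt0 // mulr_gt0.
pose T1 := expR ((Lmin + ln 4) / mu).
pose T2 := 2 * mu * `|ln k| / r + 1.
exists (Num.max (Num.max 1 T1) T2) => n l.
rewrite !ge_max => /andP [/andP [n1 nT1] nT2] l0 lLn.
set nr : R := n%:R.
have nr0 : 0 < nr by apply: lt_le_trans n1.
set a := ln nr.
have aT : (Lmin + ln 4) / mu <= a by rewrite -[X in X <= _]expRK ler_ln ?posrE ?expR_gt0.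
set L := mu * a - ln 4.
have LL : Lmin <= L by rewrite /L; rewrite ler_pdivrMr // in aT; lra.
have [[L1 L2r] L4] : (1 <= L /\ 2 * r <= L) /\ 4 * (ln 4 + c1) <= L.
  by move: LL; rewrite !ge_max => /andP [/andP [-> ->] ->].
have L0 : 0 < L by lra.
set N := nr ^+ (l * p).
have lp1 : (1 <= l * p)%N by rewrite muln_gt0 l0 p0.
have Nn : nr <= N by rewrite -[X in X <= _]expr1; apply: ler_weXn2l.
set A := r * N.
have A0 : 0 < A by rewrite mulr_gt0 // (lt_le_trans nr0 Nn).
have XA : 2 `^ (Rate * N) = expR A by rewrite powR2E /A /r mulrAC.
have LA : L <= A.
  have t := ln_tangent nr0 k0.
  have e : mu * (nr / k) = r * nr / 2.
    by rewrite /k; field; rewrite ?gt_eqF.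
  have lk : ln k <= `|ln k| by apply: ler_norm.
  have Hn : 2 * mu * `|ln k| <= r * nr.
    have h : 2 * mu * `|ln k| / r <= nr by move: nT2; rewrite /T2; lra.
    by rewrite ler_pdivrMr // in h; rewrite [r * nr]mulrC.
  have : r * nr <= A by apply: ler_wpM2l => //; exact: ltW.
  have h1 : mu * a <= mu * (nr / k + ln k - 1) by apply: ler_wpM2l; [exact: ltW | exact: t].
  have h2 : mu * ln k <= mu * `|ln k| by apply: ler_wpM2l; [exact: ltW | exact: lk].
  have l4 : 0 <= ln (4 : R) by apply: ln_ge0; rewrite ler1n.
  rewrite /L; move: h1; rewrite !mulrDr mulrN1 e; lra.
set Kn := ((n.+1 ^ p) ^ l)%N.
have KE : (Kn%:R : R) = (nr + 1) ^+ (l * p).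
  by rewrite /Kn -expnM mulnC natrX -natr1.
have K0 : (0 : R) < Kn%:R by rewrite KE exprn_gt0 // addr_gt0.
have NK : N <= Kn%:R.
  rewrite KE /N; apply: lerXn2r; rewrite ?nnegrE ?ltW ?addr_gt0 //; lra.
have HK : ln (Kn%:R : R) <= ln A + c1.
  have N0 : 0 < N by apply: lt_le_trans Nn.
  rewrite KE (@lnXn R (l * p) (nr + 1)) ?addr_gt0 // /A lnM ?posrE // /N (@lnXn R (l * p) nr) //.
  have e1 : ln (nr + 1) <= a + 1 / nr.
    have inv0 : 0 < 1 / nr by rewrite divr_gt0.
    have hm1 : -1 < 1 / nr by lra.
    have := le_ln1Dx hm1.
    have -> : 1 + 1 / nr = (nr + 1) / nr by rewrite mulrDl divff ?gt_eqF // mul1r addrC.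
    by rewrite ln_div ?posrE ?addr_gt0 // /a; lra.
  have e2 : ln (nr + 1) *+ (l * p) <= (a + 1 / nr) *+ (l * p) by apply: ler_wMn2r.
  apply: le_trans e2 _.
  have e3 : (1 / nr) *+ (l * p) <= p%:R.
    rewrite -mulr_natr natrM mulrA mul1r [nr^-1 * _]mulrC.
    apply: ler_piMl; first exact: ler0n.
    by rewrite ler_pdivrMr // mul1r ler_nat.
  rewrite mulrnDl -/a; have : - ln r <= `|ln r| by rewrite -normrN ler_norm.
  rewrite /c1; lra.
pose m := (Num.truncn (A / L)).+1.
have AL0 : 0 < A / L by rewrite divr_gt0.
have m1 : A / L < m%:R by exact: truncnS_gt.
have m2 : m%:R <= A / L + 1.
  by rewrite /m -natr1 lerD2r truncn_le ltW.
have m0 : (0 : R) < m%:R by apply: lt_trans m1.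
have AmL : A < m%:R * L by move: m1; rewrite ltr_pdivrMr.
have AL1 : 1 <= A / L by rewrite ler_pdivlMr // mul1r.
exists m; split; first by [].
- rewrite -(ler_nat R).
  have h : N * (2 * r) <= N * L by apply: ler_wpM2l; [exact: ltW (lt_le_trans nr0 Nn) | exact: L2r].
  have h2 : 2 * (A / L) <= N.
    by rewrite mulrA ler_pdivrMr // /A; lra.
  lra.
- rewrite XA powRnE // -/a; exact: (part_i L0 AmL).
- have ld : ln ((Kn%:R : R) / m%:R) = ln (Kn%:R : R) - ln m%:R.
    by rewrite ln_div // posrE.
  have Km : (0 : R) < Kn%:R / m%:R by rewrite divr_gt0.
  rewrite XA (exp_pow _ Km) -expRD ler_expR ld.
  have c10 : 0 <= c1 by rewrite /c1 addr_ge0.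
  exact: (core_ineq L0 LA L1 c10 L4 K0 HK m1 m2).
Qed.

Local Open Scope classical_set_scope.
Local Open Scope ring_scope.

Lemma extract (R : realType) (n l : nat -> nat) (om T : R) :
  (fun i => (n i)%:R : R) @ \oo --> +oo ->
  (fun i => (l i)%:R / (n i)%:R `^ om : R) @ \oo --> 0%R ->
  exists i, T <= (n i)%:R /\ (l i)%:R / (n i)%:R `^ om < 1.
Proof.
move=> Hn Hl.
have /cvgryPge h1 := Hn.
have /cvgr0_norm_lt h2 := Hl.
move: {h1 h2} (h1 T) (h2 _ (@ltr01 R)) => h1 h2.
have h3 : \forall i \near \oo, T <= (n i)%:R /\ (l i)%:R / (n i)%:R `^ om < 1.
  apply: filterS2 h1 h2 => i a b; split => //.
  by apply: le_lt_trans b; apply: ler_norm.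
exact: filter_ex h3.
Qed.

Lemma eps_small (R : realType) (mu : R) : 0 < mu ->
  exists T : R, forall n : nat, T <= n%:R -> 8 * n%:R `^ (- mu) <= 1.
Proof.
move=> mu0; exists (expR (ln 8 / mu)) => n hn.
have n0 : (0 : R) < n%:R by apply: lt_le_trans hn; exact: expR_gt0.
have : ln 8 / mu <= ln n%:R by rewrite -[X in X <= _]expRK ler_ln ?posrE ?expR_gt0.
rewrite ler_pdivrMr // => h.
rewrite powRnE // -[X in X * _]lnK ?posrE // -expRD -[X in _ <= X]expR0 ler_expR.
lra.
Qed.


Lemma restrict_bound (R : realType) (O : finType) M M' m (f : 'I_M -> O -> R) (B : 'I_M -> {set O}) (d : R) :
  (M' <= M)%N -> (0 < m)%N ->
  (forall i o, 0 <= f i o) -> 0 <= d -> 0 <= 1 - d ->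
  (forall i, 1 - d <= \sum_(o in B i) f i o) ->
  (forall i j, j != i -> \sum_(o in B j) f i o <= d) ->
  M'%:R * d ^+ m < (1 - d) ^+ m ->
  (M' < \sum_(k < m.+1) 'C(#|O|, k))%N.
Proof.
move=> MM m0 f0 d0 d1 Hown Hoth Hm.
apply: (@sample_bound R O M' m (fun j => f (widen_ord MM j)) (fun j => B (widen_ord MM j)) d) => //.
move=> i j ji; apply: Hoth.
by apply: contra ji => /eqP e; apply/eqP/val_inj; move: e => /(congr1 val).
Qed.

Theorem theorem2 (R : realType) (q : nat) (mu Rate : R) :
  (2 <= q)%N -> 0 < mu -> 0 < Rate ->
  let omega := Num.min 1 (mu / 4) in
  ~ exists (n l M : nat -> nat) (C : forall i, IDcode R q (n i) (l i) (M i)),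
    [/\ (fun i => (n i)%:R : R) @ \oo --> +oo,
        (fun i => (l i)%:R / (n i)%:R `^ omega : R) @ \oo --> 0%R,
        forall i, 2 `^ (Rate * (n i)%:R ^+ (l i * (q - 1))) <= (M i)%:R,
        forall i, lambda1 (C i) < (n i)%:R `^ (- mu)
      & forall i, lambda2 (C i) < (n i)%:R `^ (- mu)].
Proof.
move=> hq hmu hR omega [n [l [M [C [Hn Hl HM H1 H2]]]]].
move: C HM H1 H2; case: q hq => [//|p] hq C HM H1 H2.
have p0 : (0 < p)%N by [].
have [T0 HT0] := numeric hmu hR p0.
have [T1 HT1] := eps_small hmu.
have [i [Ti Hli]] := extract (Num.max (Num.max T0 T1) 1) Hn Hl.
move: Ti; rewrite !ge_max => /andP [/andP [Ti0 Ti1] ni1].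
have HMi := HM i; rewrite subn1 /= in HMi.
have H1i := H1 i; have H2i := H2 i.
move: (C i) HMi H1i H2i Hli Ti0 Ti1 ni1 => {C HM H1 H2 Hn Hl} Ci.
move: (n i) (l i) (M i) Ci => nn ll MM Ci HMi H1i H2i Hli Ti0 Ti1 ni1.
set eps := nn%:R `^ (- mu).
rewrite -/eps in H1i H2i.
have n0 : (0 : R) < nn%:R by apply: lt_le_trans ni1; exact: ltr01.
have e0 : 0 < eps by apply: powR_gt0.
have e8 : 8 * eps <= 1 := HT1 nn Ti1.
have lln : (ll <= nn)%N.
  have pw0 : 0 < nn%:R `^ omega by apply: powR_gt0.
  rewrite ltr_pdivrMr // mul1r in Hli.
  have : nn%:R `^ omega <= nn%:R.
    by apply: ler1_powR; [exact: ni1 | rewrite /omega ge_min lexx].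
  move=> h; have := lt_le_trans Hli h; rewrite ltr_nat; exact: ltnW.
set d := 2 * eps.
have d0 : 0 <= d by rewrite /d; lra.
have d1 : 0 <= 1 - d by rewrite /d; lra.
have own : forall j, 1 - d <= \sum_(o in Bset (Dd Ci j)) piO Ci j o.
  move=> j; apply: le_trans (code_B_own Ci j); rewrite /d; lra.
have oth : forall j j', j' != j -> \sum_(o in Bset (Dd Ci j')) piO Ci j o <= d.
  move=> j j' jj; apply: le_trans (code_B_other Ci jj) _; rewrite /d; lra.
have f0 : forall j o, 0 <= piO Ci j o by move=> j o; exact: piO_ge0.
have cardO : #|Oty p nn ll| = ((nn.+1 ^ p) ^ ll)%N.
  by rewrite /Oty !card_ffun !card_ord.
case: (posnP ll) => [l0|lpos].
  subst ll.
  have M2 : (2 <= MM)%N.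
    have ln20 : 0 < ln (2 : R) by apply: ln_gt0; rewrite ltr1n.
    have X1 : (1 : R) < 2 `^ (Rate * nn%:R ^+ (0 * p)).
      by rewrite mul0n expr0 mulr1 powR2E -[X in X < _]expR0 ltr_expR mulr_gt0.
    by have := lt_le_trans X1 HMi; rewrite ltr1n.
  have := restrict_bound M2 (isT : (0 < 1)%N) f0 d0 d1 own oth.
  rewrite cardO !expr1 expn0 big_ord_recr big_ord1 /= bin0 bin1.
  by move=> /(_ _) h; have := h (ltac:(rewrite /d; lra)).
have [m [m0 mK Hi Hii]] := HT0 nn ll Ti0 lpos lln.
rewrite -/eps -/d in Hi.
set X := 2 `^ (Rate * nn%:R ^+ (ll * p)) in HMi Hi Hii.
pose M' := Num.truncn X.
have X0 : 0 <= X by apply: powR_ge0.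
have M'X : M'%:R <= X by rewrite truncn_le.
have XM' : X < M'.+1%:R by exact: truncnS_gt.
have M'M : (M' <= MM)%N by rewrite -(ler_nat R); apply: le_trans M'X HMi.
have Hm : M'%:R * d ^+ m < (1 - d) ^+ m.
  apply: le_lt_trans Hi; apply: ler_wpM2r => //; exact: exprn_ge0.
have := restrict_bound M'M m0 f0 d0 d1 own oth Hm.
rewrite cardO => HM'.
have hb := binom_bound R m0 mK.
have : (M'.+1%:R : R) <= X.
  apply: le_trans Hii; apply: le_trans hb; rewrite ler_nat; exact: HM'.
by rewrite leNgt XM'.
Qed.
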